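(* Let $g\in\mathcal{P}(\mathbb{R})$, $\beta,\sigma>0$ and $\gamma:=\beta+\sigma^2/2$. There is a constant $C(\beta,\sigma)$ such that for all $z\in\mathbb{C}$ with $\Re(z)\in[0,\beta]$, $$|P(z)|+|P'(z)|\le\Big(1+\int_{\mathbb{R}}\omega^2g(\mathrm{d}\omega)\Big)\frac{C(\beta,\sigma)}{|\Im(z)|^2}.$$
   Context: For $z\in\mathbb{C}$ with $\Re(z)\in(-\sigma^2/2,\gamma)$, $P(z):=\int_{\mathbb{R}}\frac{g(\mathrm{d}\omega)}{(\gamma+i\omega-z)(\frac{\sigma^2}{2}+z-i\omega)}$ (a holomorphic function on this strip), and $P'$ denotes its complex derivative. *)

(* Defs.v *)
From HB Require Import structures.
From mathcomp Require Import all_boot all_order all_algebra.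
From mathcomp Require Import all_classical all_reals all_analysis.
From mathcomp Require Import complex.
Set Implicit Arguments. Unset Strict Implicit. Unset Printing Implicit Defensive.
Import Order.TTheory GRing.Theory Num.Theory.
Import numFieldNormedType.Exports.
Local Open Scope ring_scope.
Local Open Scope complex_scope.

Definition Pintegrand (R : realType) (beta sigma : R) (z : R[i]) (w : R) : R[i] :=
  let gamma := beta + sigma ^+ 2 / 2 in
  ((gamma%:C + 'i * w%:C - z) * ((sigma ^+ 2 / 2)%:C + z - 'i * w%:C))^-1.

Definition Pstrip (R : realType) (g : probability R R) (beta sigma : R)
    (z : R[i]) : R[i] :=
  (\int[g]_w complex.Re (Pintegrand beta sigma z w))%:C
  + 'i * (\int[g]_w complex.Im (Pintegrand beta sigma z w))%:C.

Definition Pstrip_deriv (R : realType) (g : probability R R) (beta sigma : R)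
    (z : R[i]) : R[i] :=
  @derive1 (R[i] : numFieldType) (R[i] : numFieldType)^o (Pstrip g beta sigma) z.

(* Main.v *)
Require Import Defs.
From HB Require Import structures.
From mathcomp Require Import all_boot all_order all_algebra.
From mathcomp Require Import all_classical all_reals all_analysis.
From mathcomp Require Import complex.
Import Order.TTheory GRing.Theory Num.Theory.
Import numFieldNormedType.Exports.
Local Open Scope ring_scope.
From mathcomp Require Import ring lra measurable_realfun.
Set Implicit Arguments. Unset Strict Implicit. Unset Printing Implicit Defensive.


Section S.
Variable R : realType.
Notation normc := (@ComplexField.Normc.normc R).

Lemma normc_ge0 (u : R[i]) : (0:R) <= normc u.
Proof. by case: u => a b; rewrite /= sqrtr_ge0. Qed.

Lemma normc_Re (u : R[i]) : `|complex.Re u| <= normc u :> R.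
Proof.
case: u => a b /=; rewrite -sqrtr_sqr ler_sqrt ?addr_ge0 ?sqr_ge0 //.
by rewrite lerDl sqr_ge0.
Qed.

Lemma normc_Im (u : R[i]) : `|complex.Im u| <= normc u :> R.
Proof.
case: u => a b /=; rewrite -sqrtr_sqr ler_sqrt ?addr_ge0 ?sqr_ge0 //.
by rewrite lerDr sqr_ge0.
Qed.

Lemma normc_RI (u v : R) : normc ((u%:C)%C + 'i%C * (v%:C)%C) <= `|u| + `|v| :> R.
Proof.
apply: le_trans (le_normcD _ _) _.
by rewrite /= !(mul0r, mul1r, subr0, add0r, expr0n) /= !addr0 !sqrtr_sqr oppr0 expr2 mul0r add0r sqrtr_sqr.
Qed.

Lemma normCE (u : R[i]) : `|u| = ((normc u)%:C)%C.
Proof. by rewrite normc_def; case: u. Qed.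

End S.

Section S.
Variable R : realType.

Definition cont (F : R -> R[i]) :=
  continuous (fun w => complex.Re (F w)) /\ continuous (fun w => complex.Im (F w)).

Lemma cont_cst c : cont (fun _ => c).
Proof. by split => w; apply: cvg_cst. Qed.

Lemma cont_R : cont (fun w => (w%:C)%C).
Proof. by split => w /=; [apply: cvg_id | apply: cvg_cst]. Qed.

Lemma cont_add F G : cont F -> cont G -> cont (fun w => F w + G w).
Proof.
move=> [F1 F2] [G1 G2]; rewrite /cont.
have -> : (fun w => complex.Re (F w + G w)) = (fun w => complex.Re (F w) + complex.Re (G w)).
  by apply: funext => w; case: (F w) => ? ?; case: (G w).
have -> : (fun w => complex.Im (F w + G w)) = (fun w => complex.Im (F w) + complex.Im (G w)).
  by apply: funext => w; case: (F w) => ? ?; case: (G w).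
by split => w; apply: cvgD; [apply: F1|apply: G1|apply: F2|apply: G2].
Qed.

Lemma cont_opp F : cont F -> cont (fun w => - F w).
Proof.
move=> [F1 F2]; rewrite /cont.
have -> : (fun w => complex.Re (- F w)) = (fun w => - complex.Re (F w)).
  by apply: funext => w; case: (F w) => ? ?.
have -> : (fun w => complex.Im (- F w)) = (fun w => - complex.Im (F w)).
  by apply: funext => w; case: (F w) => ? ?.
by split => w; apply: cvgN; [apply: F1|apply: F2].
Qed.

Lemma cont_sub F G : cont F -> cont G -> cont (fun w => F w - G w).
Proof. by move=> cF cG; apply: cont_add => //; apply: cont_opp. Qed.

Lemma cont_mul F G : cont F -> cont G -> cont (fun w => F w * G w).
Proof.
move=> [F1 F2] [G1 G2]; rewrite /cont.
have -> : (fun w => complex.Re (F w * G w)) = (fun w => complex.Re (F w) * complex.Re (G w) - complex.Im (F w) * complex.Im (G w)).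
  by apply: funext => w; case: (F w) => ? ?; case: (G w).
have -> : (fun w => complex.Im (F w * G w)) = (fun w => complex.Re (F w) * complex.Im (G w) + complex.Im (F w) * complex.Re (G w)).
  by apply: funext => w; case: (F w) => ? ?; case: (G w).
by split => w; [apply: cvgB|apply: cvgD]; apply: cvgM; [apply: F1|apply: G1|apply: F2|apply: G2|apply: F1|apply: G2|apply: F2|apply: G1].
Qed.

Lemma cont_inv F : cont F -> (forall w, F w != 0) -> cont (fun w => (F w)^-1).
Proof.
move=> [F1 F2] F0; rewrite /cont.
have nz w : complex.Re (F w) ^+ 2 + complex.Im (F w) ^+ 2 != 0.
  move: (F0 w); case: (F w) => a b /=; apply: contra => /eqP.
  move/eqP; rewrite paddr_eq0 ?sqr_ge0 // !sqrf_eq0 => /andP[/eqP-> /eqP->] //.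
have -> : (fun w => complex.Re ((F w)^-1)) = (fun w => complex.Re (F w) * (complex.Re (F w) ^+ 2 + complex.Im (F w) ^+ 2)^-1).
  by apply: funext => w; case: (F w) => ? ?.
have -> : (fun w => complex.Im ((F w)^-1)) = (fun w => - (complex.Im (F w) * (complex.Re (F w) ^+ 2 + complex.Im (F w) ^+ 2)^-1)).
  by apply: funext => w; case: (F w) => ? ?.
split => w; last apply: cvgN; apply: cvgM; try apply: F1; try apply: F2;
  (apply: cvgV; first exact: nz); apply: cvgD; rewrite expr2; apply: cvgM;
  try apply: F1; apply: F2.
Qed.

Lemma cont_meas F : cont F ->
  measurable_fun setT (fun w => complex.Re (F w)) /\ measurable_fun setT (fun w => complex.Im (F w)).
Proof. by move=> [F1 F2]; split; apply: continuous_measurable_fun. Qed.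

End S.

Section S.
Variable R : realType.
Variable g : probability R R.

Lemma gT : g setT = 1%E.
Proof. exact: probability_setT. Qed.

Lemma bint (f : R -> R) (M : R) : measurable_fun setT f -> (forall w, `|f w| <= M) ->
  g.-integrable setT (EFin \o f).
Proof.
move=> mf fM; apply/integrableP; split; first exact/measurable_EFinP.
apply: (@le_lt_trans _ _ (\int[g]_(x in setT) (cst M%:E) x))%E.
  apply: ge0_le_integral => //.
  - by do 2 apply: measurableT_comp => //; exact/measurable_EFinP.
  - by move=> x _; rewrite /= lee_fin fM.
rewrite integral_cst //; set m := (X in (_ * X)%E); have -> : m = 1%E by exact: probability_setT.
by rewrite mule1 ltry.
Qed.

Lemma Rint_bound (f : R -> R) (M : R) : measurable_fun setT f -> (forall w, `|f w| <= M) ->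
  `|\int[g]_w f w| <= M.
Proof.
move=> mf fM; apply: le_trans (le_normr_Rintegral _ _) _ => //; first exact: bint fM.
apply: le_trans (@le_Rintegral _ _ _ g setT _ (fun=> M) _ _ _ _) _ => //.
- apply: (@bint _ M); first exact: measurableT_comp.
  by move=> w; rewrite normr_id fM.
- apply: (@bint _ M) => // w; rewrite ger0_norm //; apply: le_trans (fM w); exact: normr_ge0.
- rewrite Rintegral_cst //; set m := (X in fine X); have -> : m = 1%E by exact: probability_setT.
  by rewrite /= mulr1.
Qed.

End S.

Section CI.
Variable R : realType.
Variable g : probability R R.
Notation normc := (@ComplexField.Normc.normc R).

Definition CI (F : R -> R[i]) : R[i] :=
  ((\int[g]_w complex.Re (F w))%:C + 'i * (\int[g]_w complex.Im (F w))%:C)%C.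

Definition nice (F : R -> R[i]) := cont F /\ exists M : R, forall w, normc (F w) <= M.

Lemma nice_intRe F : nice F -> g.-integrable setT (EFin \o (fun w => complex.Re (F w))).
Proof.
move=> [/cont_meas [m1 m2] [M hM]]; apply: (bint g (M := M)) => // w.
exact: le_trans (normc_Re _) (hM w).
Qed.

Lemma nice_intIm F : nice F -> g.-integrable setT (EFin \o (fun w => complex.Im (F w))).
Proof.
move=> [/cont_meas [m1 m2] [M hM]]; apply: (bint g (M := M)) => // w.
exact: le_trans (normc_Im _) (hM w).
Qed.

Lemma CIE F : CI F = Complex (\int[g]_w complex.Re (F w)) (\int[g]_w complex.Im (F w)).
Proof. by rewrite /CI /=; congr Complex; ring. Qed.

Lemma nice_sub F G : nice F -> nice G -> nice (fun w => F w - G w).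
Proof.
move=> [cF [M hM]] [cG [N hN]]; split; first exact: cont_sub.
exists (M + N) => w; apply: le_trans (le_normcD _ _) _.
by rewrite normcN lerD.
Qed.

Lemma nice_scale c F : nice F -> nice (fun w => c * F w).
Proof.
move=> [cF [M hM]]; split; first exact: cont_mul (cont_cst _) cF.
exists (normc c * M) => w; rewrite ComplexField.Normc.normcM.
by apply: ler_wpM2l; [exact: normc_ge0|exact: hM].
Qed.

Lemma CI_sub F G : nice F -> nice G -> CI (fun w => F w - G w) = CI F - CI G.
Proof.
move=> nF nG; rewrite !CIE.
have -> : (fun w => complex.Re (F w - G w)) = (fun w => complex.Re (F w) - complex.Re (G w)).
  by apply: funext => w; case: (F w) => ? ?; case: (G w).
have -> : (fun w => complex.Im (F w - G w)) = (fun w => complex.Im (F w) - complex.Im (G w)).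
  by apply: funext => w; case: (F w) => ? ?; case: (G w).
rewrite !RintegralB //; try exact: nice_intRe; try exact: nice_intIm.
Qed.

Lemma CI_scale c F : nice F -> CI (fun w => c * F w) = c * CI F.
Proof.
move=> nF; rewrite !CIE.
have -> : (fun w => complex.Re (c * F w)) = (fun w => complex.Re c * complex.Re (F w) - complex.Im c * complex.Im (F w)).
  by apply: funext => w; case: (F w) => ? ?; case: c.
have -> : (fun w => complex.Im (c * F w)) = (fun w => complex.Re c * complex.Im (F w) + complex.Im c * complex.Re (F w)).
  by apply: funext => w; case: (F w) => ? ?; case: c.
have i1 := nice_intRe nF; have i2 := nice_intIm nF.
have s1 : forall k, g.-integrable setT (EFin \o (fun w => k * complex.Re (F w))).
  move=> k; rewrite (_ : _ \o _ = (fun x => k%:E * (EFin \o (fun w => complex.Re (F w))) x)%E).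
    exact: integrableZl.
  by apply: funext => x; rewrite /= EFinM.
have s2 : forall k, g.-integrable setT (EFin \o (fun w => k * complex.Im (F w))).
  move=> k; rewrite (_ : _ \o _ = (fun x => k%:E * (EFin \o (fun w => complex.Im (F w))) x)%E).
    exact: integrableZl.
  by apply: funext => x; rewrite /= EFinM.
rewrite RintegralB // RintegralD // !RintegralZl //.
by case: c => a b /=.
Qed.

Lemma CI_norm F M : nice F -> (forall w, normc (F w) <= M) -> normc (CI F) <= M + M.
Proof.
move=> [/cont_meas [m1 m2] _] hM; apply: le_trans (normc_RI _ _) _.
apply: lerD; apply: Rint_bound => // w.
  exact: le_trans (normc_Re _) (hM w).
exact: le_trans (normc_Im _) (hM w).
Qed.

End CI.

Section M.
Variable R : realType.
Variables beta sigma : R.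
Hypothesis hb : 0 < beta.
Hypothesis hs : 0 < sigma.
Notation normc := (@ComplexField.Normc.normc R).
Local Notation s := (sigma ^+ 2 / 2).
Local Notation gam := (beta + sigma ^+ 2 / 2).

Definition Aw (z : R[i]) (w : R) : R[i] := (gam%:C + 'i * w%:C - z)%C.
Definition Bw (z : R[i]) (w : R) : R[i] := ((sigma ^+ 2 / 2)%:C + z - 'i * w%:C)%C.
Definition fw z w := (Aw z w * Bw z w)^-1.
Definition fdw z w := (Bw z w - Aw z w) / ((Aw z w * Bw z w) * (Aw z w * Bw z w)).

Lemma s_gt0 : 0 < s.
Proof. by apply: divr_gt0 => //; apply: exprn_gt0. Qed.

Lemma ReA z w : complex.Re (Aw z w) = gam - complex.Re z.
Proof. by case: z => x y; rewrite /Aw /=; ring. Qed.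
Lemma ImA z w : complex.Im (Aw z w) = w - complex.Im z.
Proof. by case: z => x y; rewrite /Aw /=; ring. Qed.
Lemma ReB z w : complex.Re (Bw z w) = s + complex.Re z.
Proof. by case: z => x y; rewrite /Bw /=; ring. Qed.
Lemma ImB z w : complex.Im (Bw z w) = complex.Im z - w.
Proof. by case: z => x y; rewrite /Bw /=; ring. Qed.

Lemma Ashift h z w : Aw (h + z) w = Aw z w - h.
Proof. rewrite /Aw; ring. Qed.
Lemma Bshift h z w : Bw (h + z) w = Bw z w + h.
Proof. rewrite /Bw; ring. Qed.

Definition good r z := 0 < r /\ r <= gam - complex.Re z /\ r <= s + complex.Re z.

Lemma normA r z w : good r z -> r <= normc (Aw z w).
Proof.
move=> [r0 [h1 h2]]; apply: le_trans (normc_Re _); rewrite ReA.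
by rewrite ger0_norm //; apply: le_trans h1; apply: ltW.
Qed.
Lemma normB r z w : good r z -> r <= normc (Bw z w).
Proof.
move=> [r0 [h1 h2]]; apply: le_trans (normc_Re _); rewrite ReB.
by rewrite ger0_norm //; apply: le_trans h2; apply: ltW.
Qed.
Lemma normA' z w : `|w - complex.Im z| <= normc (Aw z w).
Proof. by rewrite -ImA; apply: normc_Im. Qed.
Lemma normB' z w : `|w - complex.Im z| <= normc (Bw z w).
Proof. by rewrite distrC -ImB; apply: normc_Im. Qed.

Lemma nz_of_norm (u : R[i]) r : 0 < r -> r <= normc u -> u != 0.
Proof.
move=> r0 ru; apply/negP => /eqP u0; move: ru; rewrite u0 ComplexField.Normc.normc0.
by move=> h; move: (lt_le_trans r0 h); rewrite ltxx.
Qed.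

Lemma A_nz r z w : good r z -> Aw z w != 0.
Proof. by move=> gz; apply: (@nz_of_norm _ r); [case: gz|exact: normA]. Qed.
Lemma B_nz r z w : good r z -> Bw z w != 0.
Proof. by move=> gz; apply: (@nz_of_norm _ r); [case: gz|exact: normB]. Qed.

Lemma cont_A z : cont (Aw z).
Proof. by apply: cont_sub; [apply: cont_add; [apply: cont_cst|apply: cont_mul; [apply: cont_cst|apply: cont_R]]|apply: cont_cst]. Qed.
Lemma cont_B z : cont (Bw z).
Proof. by apply: cont_sub; [apply: cont_add; apply: cont_cst|apply: cont_mul; [apply: cont_cst|apply: cont_R]]. Qed.

Lemma normf z w : normc (fw z w) = (normc (Aw z w) * normc (Bw z w))^-1.
Proof. by rewrite /fw ComplexField.Normc.normcV ComplexField.Normc.normcM. Qed.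

Lemma normfd z w : normc (fdw z w) <=
  (normc (Aw z w) + normc (Bw z w)) * ((normc (Aw z w) * normc (Bw z w)) * (normc (Aw z w) * normc (Bw z w)))^-1.
Proof.
rewrite /fdw ComplexField.Normc.normcM ComplexField.Normc.normcV !ComplexField.Normc.normcM.
apply: ler_wpM2r; first by rewrite invr_ge0 !mulr_ge0 ?normc_ge0.
by apply: le_trans (le_normcD _ _) _; rewrite normcN addrC.
Qed.


Lemma RL1 (r a b : R) : 0 < r -> r <= a -> r <= b -> (a * b)^-1 <= (r * r)^-1.
Proof.
move=> r0 ra rb; have a0 : 0 < a by apply: lt_le_trans ra.
have b0 : 0 < b by apply: lt_le_trans rb.
rewrite lef_pV2 ?posrE ?mulr_gt0 //; apply: ler_pM => //; exact: ltW.
Qed.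

Lemma RL2 (r a b : R) : 0 < r -> r <= a -> r <= b ->
  (a + b) * ((a * b) * (a * b))^-1 <= (1 + 1) / r * (a * b)^-1.
Proof.
move=> r0 ra rb; have a0 : 0 < a by apply: lt_le_trans ra.
have b0 : 0 < b by apply: lt_le_trans rb.
have -> : (a + b) * ((a * b) * (a * b))^-1 = (a^-1 + b^-1) * (a * b)^-1.
  by field; apply/andP; split; apply: lt0r_neq0.
apply: ler_wpM2r; first by rewrite invr_ge0 mulr_ge0 // ltW.
rewrite mulrDl mul1r; apply: lerD; rewrite lef_pV2 ?posrE //.
Qed.

Lemma nice_f r z : good r z -> nice (fw z).
Proof.
move=> gz; split.
  apply: cont_inv; first exact: cont_mul (cont_A z) (cont_B z).
  by move=> w; rewrite mulf_neq0 // ?(A_nz _ gz) ?(B_nz _ gz).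
exists (r * r)^-1 => w; rewrite normf; apply: RL1; [by case: gz|exact: normA|exact: normB].
Qed.

Lemma nice_fd r z : good r z -> nice (fdw z).
Proof.
move=> gz; have r0 : 0 < r by case: gz.
split.
  apply: cont_mul; first exact: cont_sub (cont_B z) (cont_A z).
  apply: cont_inv; first by apply: cont_mul; exact: cont_mul (cont_A z) (cont_B z).
  by move=> w; rewrite !mulf_neq0 // ?(A_nz _ gz) ?(B_nz _ gz).
exists ((1 + 1) / r * (r * r)^-1) => w; apply: le_trans (normfd _ _) _.
apply: le_trans (RL2 r0 (normA _ gz) (normB _ gz)) _.
apply: ler_wpM2l; first by rewrite divr_ge0 // ltW.
apply: RL1 => //; [exact: normA|exact: normB].
Qed.


Lemma RL3a (s0 a b t : R) : 0 < s0 -> s0 <= a -> s0 <= b -> 0 <= t -> t <= s0 / 2 ->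
  s0 * s0 * (a * b + (a + b) * (a + b + t)) <= 6%:R * ((a * b) * (a * b)).
Proof.
move=> s00 sa sb t0 ts.
have a0 : 0 <= a by apply: le_trans sa; apply: ltW.
have b0 : 0 <= b by apply: le_trans sb; apply: ltW.
have ss0 : 0 <= s0 by apply: ltW.
have h1 : s0 * s0 <= a * b by apply: ler_pM.
have h2 : s0 * s0 <= b * b by apply: ler_pM.
have h3 : s0 * s0 <= a * a by apply: ler_pM.
have hab : 0 <= a * b by apply: mulr_ge0.
have e1 : s0 * s0 * (a * b) <= (a * b) * (a * b) by apply: ler_wpM2r.
have e2 : s0 * s0 * (a * a) <= (b * b) * (a * a) by apply: ler_wpM2r => //; apply: mulr_ge0.
have e3 : s0 * s0 * (b * b) <= (a * a) * (b * b) by apply: ler_wpM2r => //; apply: mulr_ge0.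
have e4 : s0 * s0 * (a * t) <= s0 * s0 * (a * (s0 / 2)).
  by apply: ler_wpM2l; [apply: mulr_ge0|apply: ler_wpM2l].
have e5 : s0 * s0 * (b * t) <= s0 * s0 * (b * (s0 / 2)).
  by apply: ler_wpM2l; [apply: mulr_ge0|apply: ler_wpM2l].
have e6 : s0 * s0 * (s0 * a) <= (b * b) * (a * a).
  by apply: ler_pM => //; [apply: mulr_ge0|apply: mulr_ge0|apply: ler_wpM2r].
have e7 : s0 * s0 * (s0 * b) <= (a * a) * (b * b).
  by apply: ler_pM => //; [apply: mulr_ge0|apply: mulr_ge0|apply: ler_wpM2r].
have -> : s0 * s0 * (a * b + (a + b) * (a + b + t)) =
  s0 * s0 * (a * b) * 3%:R + s0 * s0 * (a * a) + s0 * s0 * (b * b) + s0 * s0 * (a * t) + s0 * s0 * (b * t).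
  by ring.
have q3 : (b * b) * (a * a) = (a * b) * (a * b) by ring.
have q4 : (a * a) * (b * b) = (a * b) * (a * b) by ring.
have q5 : s0 * s0 * (a * (s0 / 2)) = (s0 * s0 * (s0 * a)) / 2 by ring.
have q6 : s0 * s0 * (b * (s0 / 2)) = (s0 * s0 * (s0 * b)) / 2 by ring.
rewrite q5 in e4; rewrite q6 in e5.
rewrite q3 in e2; rewrite q4 in e3; rewrite q3 in e6; rewrite q4 in e7.
lra.
Qed.

Lemma RL3 (s0 a b a' b' t : R) : 0 < s0 -> s0 <= a -> s0 <= b -> s0 / 2 <= a' -> s0 / 2 <= b' ->
  0 <= t -> t <= s0 / 2 ->
  t ^+ 2 * (a * b + (a + b) * (a + b + t)) * (((a * b) * (a * b)) * (a' * b'))^-1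
  <= t ^+ 2 * (24%:R / (s0 * s0 * s0 * s0)).
Proof.
move=> s00 sa sb sa' sb' t0 ts.
have a0 : 0 < a by apply: lt_le_trans sa.
have b0 : 0 < b by apply: lt_le_trans sb.
have s20 : 0 < s0 / 2 by apply: divr_gt0.
rewrite -mulrA; apply: ler_wpM2l; first exact: sqr_ge0.
rewrite (invfM ((a * b) * (a * b))) (mulrA (a * b + (a + b) * (a + b + t))).
have -> : 24%:R / (s0 * s0 * s0 * s0) = (6%:R / (s0 * s0)) * ((s0 / 2) * (s0 / 2))^-1.
  by field; apply: lt0r_neq0.
apply: ler_pM.
- have a1 := ltW a0; have b1 := ltW b0.
  by apply: mulr_ge0; [apply: addr_ge0; apply: mulr_ge0; rewrite ?addr_ge0 | rewrite invr_ge0 !mulr_ge0].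

- have a'0 := lt_le_trans s20 sa'; have b'0 := lt_le_trans s20 sb'.
  by rewrite invr_ge0 mulr_ge0 // ltW.
- have hp : 0 < (a * b) * (a * b) by rewrite !mulr_gt0.
  rewrite ler_pdivrMr // mulrAC ler_pdivlMr ?mulr_gt0 // mulrC.
  by apply: RL3a.
- exact: RL1.
Qed.


Lemma good_shift z h : good s z -> normc h <= s / 2 -> good (s / 2) (h + z).
Proof.
move=> [_ [h1 h2]] hh; have s0 := s_gt0.
have hre : `|complex.Re h| <= s / 2 by apply: le_trans (normc_Re _) hh.
have hre' : - (s / 2) <= complex.Re h <= s / 2 by rewrite -ler_norml.
rewrite /good; have -> : complex.Re (h + z) = complex.Re h + complex.Re z by case: (h) => ? ?; case: (z).
split; first by apply: divr_gt0.
move/andP: hre' => [u v].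
split; lra.
Qed.

Lemma rem_id z h w : good s z -> normc h <= s / 2 ->
  fw (h + z) w - fw z w - h * fdw z w =
  h ^+ 2 * (Aw z w * Bw z w + (Aw z w - Bw z w) * (Aw z w - Bw z w - h)) *
  (((Aw z w * Bw z w) * (Aw z w * Bw z w)) * ((Aw z w - h) * (Bw z w + h)))^-1.
Proof.
move=> gz hh; have gzh := good_shift gz hh.
have nA := A_nz w gz; have nB := B_nz w gz.
have nA' := A_nz w gzh; have nB' := B_nz w gzh.
rewrite Ashift in nA'; rewrite Bshift in nB'.
rewrite /fw /fdw Ashift Bshift.
move: nA nB nA' nB'; set A := Aw z w; set B := Bw z w => nA nB nA' nB'.
field.
by rewrite nA nB nA' nB'.
Qed.

Lemma rem_bound z h w : good s z -> normc h <= s / 2 ->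
  normc (fw (h + z) w - fw z w - h * fdw z w) <= normc h ^+ 2 * (24%:R / (s * s * s * s)).
Proof.
move=> gz hh; have gzh := good_shift gz hh; rewrite rem_id //.
have nA := normA w gz; have nB := normB w gz.
have nA' := normA w gzh; have nB' := normB w gzh.
rewrite Ashift in nA'; rewrite Bshift in nB'.
move: nA nB nA' nB'; set A := Aw z w; set B := Bw z w => nA nB nA' nB'.
clearbody A B.
rewrite !ComplexField.Normc.normcM ComplexField.Normc.normcV !ComplexField.Normc.normcM.
have sA := normc_ge0 A; have sB := normc_ge0 B; have sh := normc_ge0 h.
apply: le_trans (RL3 s_gt0 nA nB nA' nB' sh hh).
rewrite -expr2.
rewrite -mulrA -[X in _ <= X]mulrA; apply: ler_wpM2l; first exact: sqr_ge0.
apply: ler_wpM2r; first by rewrite invr_ge0 !mulr_ge0 ?normc_ge0.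
apply: le_trans (le_normcD _ _) _; rewrite ComplexField.Normc.normcM.
apply: lerD; first exact: lexx.
rewrite ComplexField.Normc.normcM; apply: ler_pM; try exact: normc_ge0.
- by apply: le_trans (le_normcD _ _) _; rewrite normcN.
- apply: le_trans (le_normcD _ _) _; rewrite normcN; apply: lerD; last exact: lexx.
  by apply: le_trans (le_normcD _ _) _; rewrite normcN.
Qed.

End M.

Section D.
Variable R : realType.
Variables beta sigma : R.
Hypothesis hb : 0 < beta.
Hypothesis hs : 0 < sigma.
Variable g : probability R R.
Notation normc := (@ComplexField.Normc.normc R).
Local Notation s := (sigma ^+ 2 / 2).

Lemma PstripE z : Pstrip g beta sigma z = CI g (fw beta sigma z).
Proof. by []. Qed.

Lemma quot_bound z h : good beta sigma s z -> h != 0 -> normc h <= s / 2 ->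
  normc (h^-1 * (Pstrip g beta sigma (h + z) - Pstrip g beta sigma z) - CI g (fdw beta sigma z))
  <= normc h * (48%:R / (s * s * s * s)).
Proof.
move=> gz h0 hh; have gzh := good_shift hs gz hh.
have n1 := nice_f gzh; have n0 := nice_f gz; have nd := nice_fd gz.
have -> : h^-1 * (Pstrip g beta sigma (h + z) - Pstrip g beta sigma z) - CI g (fdw beta sigma z)
  = h^-1 * (CI g (fw beta sigma (h + z)) - CI g (fw beta sigma z) - h * CI g (fdw beta sigma z)).
  by rewrite !PstripE; field.
rewrite -CI_sub // -CI_scale // -CI_sub //; last by apply: nice_scale.
  2: by apply: nice_sub.
rewrite ComplexField.Normc.normcM ComplexField.Normc.normcV.
have hp : 0 < normc h.
  rewrite lt_def normc_ge0 andbT; apply/negP => /eqP /ComplexField.Normc.eq0_normc h00.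
  by move: h0; rewrite h00 eqxx.
rewrite -ler_pdivlMl ?invr_gt0 // invrK.
have nF : nice (fun w => fw beta sigma (h + z) w - fw beta sigma z w - h * fdw beta sigma z w).
  by apply: nice_sub; [apply: nice_sub|apply: nice_scale].
have := CI_norm g nF (fun w => rem_bound hs w gz hh).
move/le_trans; apply.
have s0 := s_gt0 hs.
rewrite [X in _ <= X]mulrA -expr2 -mulrDr; apply: ler_wpM2l; first exact: sqr_ge0.
by rewrite -mulrDl -natrD.
Qed.



Lemma deriv_eq z : good beta sigma s z -> Pstrip_deriv g beta sigma z = CI g (fdw beta sigma z).
Proof.
move=> gz; rewrite /Pstrip_deriv /derive1.
pose Co := ((R[i] : numFieldType)^o).
suff HH : ((fun h : (R[i] : numFieldType) => (h^-1 *: (Pstrip g beta sigma (h + z) - Pstrip g beta sigma z) : Co)) @ (0 : (R[i] : numFieldType))^' --> (CI g (fdw beta sigma z) : Co))%classic.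
  exact: cvg_lim HH.
apply/cvgrPdist_le => e e0.
move: e0; rewrite ltcE; case/andP => eI er0.
have eI0 : complex.Im e = 0 by move/eqP: eI.
rewrite /= in er0.
have s0 := s_gt0 hs.
pose K : R := 48%:R / (s * s * s * s).
have K0 : 0 < K by rewrite divr_gt0 // !mulr_gt0.
pose r : R := Num.min (s / 2) (complex.Re e / K).
have r0 : 0 < r by rewrite lt_min; apply/andP; split; apply: divr_gt0.
near=> t.
have t0 : t != 0 by near: t; exact: nbhs_dnbhs_neq.
have tr : `|t| < (r%:C)%C.
  near: t; apply: nbhs_dnbhs.
  have rC : (0 : R[i]) < (r%:C)%C by rewrite ltcR.
  apply/nbhs_ballP; exists (r%:C)%C => //= x; rewrite /ball /= sub0r normrN. by []. 
move: tr; rewrite normCE ltcR lt_min => /andP[t1 t2].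
rewrite normCE lecE /= eI0 eqxx /=.
rewrite -opprB normcN.
apply: le_trans (quot_bound gz t0 (ltW t1)) _.
by rewrite -ler_pdivlMr // ltW.
Unshelve. all: by end_near.
Qed.

End D.

Section F.
Variable R : realType.
Notation normc := (@ComplexField.Normc.normc R).

Lemma RL4 (s0 a b w y : R) : 0 < s0 -> s0 <= a -> s0 <= b -> `|w - y| <= a -> `|w - y| <= b ->
  y != 0 -> (a * b)^-1 <= (2%:R + 2%:R / (s0 * s0)) * (1 + w ^+ 2) / y ^+ 2.
Proof.
move=> s00 sa sb wa wb y0.
have a0 : 0 < a by apply: lt_le_trans sa.
have b0 : 0 < b by apply: lt_le_trans sb.
have P0 : 0 < a * b by apply: mulr_gt0.
have y20 : 0 < y ^+ 2 by rewrite exprn_even_gt0.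
rewrite ler_pdivlMr // mulrC ler_pdivrMr //.
have h1 : (w - y) ^+ 2 <= a * b.
  rewrite -(real_normK (num_real _)) expr2; apply: ler_pM => //; exact: normr_ge0.
have h2 : s0 * s0 <= a * b by apply: ler_pM => //; apply: ltW.
have ss0 : 0 < s0 * s0 by apply: mulr_gt0.
have e1 : 2%:R <= 2%:R / (s0 * s0) * (a * b).
  by rewrite mulrAC ler_pdivlMr // ler_pM2l.
have w20 : 0 <= 1 + w ^+ 2 by rewrite addr_ge0 // sqr_ge0.
have e2 : 2%:R * (1 + w ^+ 2) <= 2%:R / (s0 * s0) * (a * b) * (1 + w ^+ 2).
  by apply: ler_wpM2r.
have e3 : a * b <= a * b * (1 + w ^+ 2).
  by rewrite mulrDr mulr1 lerDl mulr_ge0 // ?sqr_ge0 // ltW.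
have e4 : 0 <= (2%:R * w - y) ^+ 2 by apply: sqr_ge0.
have -> : (2%:R + 2%:R / (s0 * s0)) * (1 + w ^+ 2) * (a * b) =
  2%:R * (a * b * (1 + w ^+ 2)) + 2%:R / (s0 * s0) * (a * b) * (1 + w ^+ 2) by ring.
move: h1 e2 e3 e4; set P := a * b; set Y := 2%:R / (s0 * s0) * P * (1 + w ^+ 2).
set X := P * (1 + w ^+ 2) => h1 e2 e3 e4.
have : y ^+ 2 <= 2%:R * (w - y) ^+ 2 + 2%:R * w ^+ 2.
  have -> : 2%:R * (w - y) ^+ 2 + 2%:R * w ^+ 2 = y ^+ 2 + (2%:R * w - y) ^+ 2 by ring.
  by rewrite lerDl.
lra.
Qed.


Lemma key (g : probability R R) (F : R -> R[i]) : nice F ->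
  ((normc (CI g F))%:E <= \int[g]_w (`|complex.Re (F w)| + `|complex.Im (F w)|)%:E)%E.
Proof.
move=> nF; have [[m1 m2] [M hM]] : (measurable_fun setT (fun w => complex.Re (F w)) /\
    measurable_fun setT (fun w => complex.Im (F w))) /\ exists M : R, forall w, normc (F w) <= M.
  by case: nF => /cont_meas ? ?.
have i1 : g.-integrable setT (EFin \o (fun w => `|complex.Re (F w)|)).
  apply: (bint g (M := M)); first exact: measurableT_comp.
  by move=> w; rewrite normr_id; apply: le_trans (normc_Re _) (hM w).
have i2 : g.-integrable setT (EFin \o (fun w => `|complex.Im (F w)|)).
  apply: (bint g (M := M)); first exact: measurableT_comp.
  by move=> w; rewrite normr_id; apply: le_trans (normc_Im _) (hM w).
have iS : g.-integrable setT (EFin \o (fun w => `|complex.Re (F w)| + `|complex.Im (F w)|)).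
  apply: (bint g (M := M + M)); first by apply: measurable_funD; exact: measurableT_comp.
  move=> w; rewrite ger0_norm ?addr_ge0 //; apply: lerD.
    exact: le_trans (normc_Re _) (hM w).
  exact: le_trans (normc_Im _) (hM w).
have -> : (\int[g]_w (`|complex.Re (F w)| + `|complex.Im (F w)|)%:E)%E =
    (\int[g]_w (`|complex.Re (F w)| + `|complex.Im (F w)|))%:E.
  by rewrite /Rintegral fineK //; exact: integrable_fin_num iS.
rewrite RintegralD // lee_fin.
apply: le_trans (normc_RI _ _) _.
apply: lerD; apply: le_normr_Rintegral => //.
  exact: nice_intRe.
exact: nice_intIm.
Qed.

End F.


Unset Implicit Arguments.
Theorem lemma5p3 (R : realType) (beta sigma : R) :
  0 < beta -> 0 < sigma ->
  exists C : R, 0 < C /\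
    forall (g : probability R R) (z : R[i]),
      0 <= complex.Re z <= beta -> complex.Im z != 0 ->
      ((ComplexField.Normc.normc (Pstrip g beta sigma z) + ComplexField.Normc.normc (Pstrip_deriv g beta sigma z))%:E
        <= (1 + \int[g]_w ((w ^+ 2)%:E))
           * (C / (`|complex.Im z| ^+ 2))%:E)%E.
Proof.
move=> hb hs.
have s0 := s_gt0 hs.
set s := sigma ^+ 2 / 2 in s0 *.
pose k : R := 2%:R + 2%:R / (s * s).
pose c : R := 2%:R * (1 + (1 + 1) / s) * k.
have k0 : 0 < k by rewrite addr_gt0 // divr_gt0 // mulr_gt0.
have c0 : 0 < c by rewrite !mulr_gt0 // addr_gt0 // divr_gt0.
exists c; split => // g z /andP[z0 zb] y0.
have gz : good beta sigma s z.
  rewrite /good /s; split => //; split; lra.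
rewrite (deriv_eq hs g gz) PstripE.
set y := complex.Im z.
have ny : `|y| ^+ 2 = y ^+ 2 by rewrite real_normK // num_real.
rewrite ny.
have nf := nice_f gz; have nd := nice_fd gz.
have mF (F : R -> R[i]) : nice F -> measurable_fun setT (fun w => (`|complex.Re (F w)| + `|complex.Im (F w)|)%:E).
  case => /cont_meas [m1 m2] _; apply/measurable_EFinP.
  by apply: measurable_funD; exact: measurableT_comp.
rewrite EFinD; apply: le_trans (leeD (key g nf) (key g nd)) _.
rewrite -ge0_integralD; last first.
- exact: mF.
- by move=> w _; rewrite lee_fin addr_ge0.
- exact: mF.
- by move=> w _; rewrite lee_fin addr_ge0.
- by [].

have pt w : `|complex.Re (fw beta sigma z w)| + `|complex.Im (fw beta sigma z w)| +
   (`|complex.Re (fdw beta sigma z w)| + `|complex.Im (fdw beta sigma z w)|)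
   <= c / y ^+ 2 * (1 + w ^+ 2).
  have nA := normA w gz; have nB := normB w gz.
  have nA' := normA' beta sigma z w; have nB' := normB' sigma z w.
  set a := ComplexField.Normc.normc (Aw beta sigma z w) in nA nA'; set b := ComplexField.Normc.normc (Bw sigma z w) in nB nB'.
  have h1 : `|complex.Re (fw beta sigma z w)| + `|complex.Im (fw beta sigma z w)| <= 2%:R * (a * b)^-1.
    rewrite -normf mulr2n mulrDl mul1r; apply: lerD; [exact: normc_Re|exact: normc_Im].
  have h2 : `|complex.Re (fdw beta sigma z w)| + `|complex.Im (fdw beta sigma z w)| <=
      2%:R * ((1 + 1) / s * (a * b)^-1).
    rewrite mulr2n mulrDl mul1r; apply: lerD;
      [apply: le_trans (normc_Re _) _|apply: le_trans (normc_Im _) _];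
      apply: le_trans (normfd _ _ _ _) _; exact: RL2.
  have h3 := RL4 s0 nA nB nA' nB' y0.
  apply: le_trans (lerD h1 h2) _.
  have -> : 2%:R * (a * b)^-1 + 2%:R * ((1 + 1) / s * (a * b)^-1) =
    2%:R * (1 + (1 + 1) / s) * (a * b)^-1 by ring.
  have -> : c / y ^+ 2 * (1 + w ^+ 2) = 2%:R * (1 + (1 + 1) / s) * (k * (1 + w ^+ 2) / y ^+ 2).
    by rewrite /c; ring.
  by apply: ler_wpM2l => //; rewrite mulr_ge0 // addr_ge0 // divr_ge0 // ltW.
apply: (@le_trans _ _ (\int[g]_w ((c / y ^+ 2)%:E * (1 + w ^+ 2)%:E))%E).
  apply: ge0_le_integral => //.
  - by move=> w _; rewrite lee_fin !addr_ge0.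
  - by apply: emeasurable_funD; exact: mF.
  - by apply: emeasurable_funM => //; apply/measurable_EFinP; apply: measurable_funD => //; exact: exprn_measurable.
  - by move=> w _; rewrite -EFinM -EFinD lee_fin pt.
rewrite ge0_integralZl_EFin //; last first.
  - by rewrite divr_ge0 ?sqr_ge0 // ltW.
  - by apply/measurable_EFinP; apply: measurable_funD => //; exact: exprn_measurable.
  - by move=> w _; rewrite lee_fin addr_ge0 ?sqr_ge0.
rewrite muleC; apply: lee_wpmul2r; first by rewrite lee_fin divr_ge0 ?sqr_ge0 // ltW.
under eq_integral do rewrite EFinD.
rewrite ge0_integralD //; last first.
  - by apply/measurable_EFinP; exact: exprn_measurable.
  - by move=> w _; rewrite lee_fin sqr_ge0.
rewrite integral_cst //.
set m := (X in (1 * X)%E); have -> : m = 1%E by exact: probability_setT.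
by rewrite mule1.
Qed.
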